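(* Let $\gamma\in\mathcal S_n$. Then $(\varepsilon,\varepsilon,\gamma;(12))\in\mathrm{Par}(n)$ if and only if the cycle structure of $\gamma$ is $2^r\cdot1^f$ for some integers $r\ge0$ and $f\ge1$; that is, $\gamma^2=\varepsilon$ and $\gamma$ has at least one fixed point.
   Context: A Latin square of order $n$ is an $n\times n$ array with rows, columns and symbols indexed by $[n]$, each symbol occurring once in each row and each column, with triple set $O(L)$. Permutations act on the right; $\varepsilon$ is the identity. A paratopism $(\alpha,\beta,\gamma;(12))$ maps $L$ to $L^\sigma$ with triple set $\{(y\beta,x\alpha,z\gamma):(x,y,z)\in O(L)\}$; it is an autoparatopism of $L$ if $L^\sigma=L$. $\mathrm{Par}(n)$ is the set of paratopisms that are autoparatopisms of at least one Latin square of order $n$. Cycle structure $c_1^{\lambda_1}\cdot c_2^{\lambda_2}\cdots$ means $\lambda_i$ cycles of length $c_i$, with fixed points counted as $1$-cycles. *)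

(* Defs.v *)
From mathcomp Require Import all_boot all_fingroup.
Set Implicit Arguments. Unset Strict Implicit. Unset Printing Implicit Defensive.

Definition lsquare (n : nat) := {ffun 'I_n * 'I_n -> 'I_n}.

(* Each symbol occurs once in each row and each column (on a finite type,
   injectivity of each row/column map is equivalent to bijectivity). *)
Definition is_latin (n : nat) (L : lsquare n) : Prop :=
  (forall x : 'I_n, injective (fun y => L (x, y))) /\
  (forall y : 'I_n, injective (fun x => L (x, y))).

Definition triples (n : nat) (L : lsquare n) : {set 'I_n * 'I_n * 'I_n} :=
  [set t | L (t.1.1, t.1.2) == t.2].

Definition par12_image (n : nat) (alpha beta gamma : {perm 'I_n}) (L : lsquare n)
  : {set 'I_n * 'I_n * 'I_n} :=
  [set (beta t.1.2, alpha t.1.1, gamma t.2) | t in triples L].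

Definition is_autopar12 (n : nat) (alpha beta gamma : {perm 'I_n}) (L : lsquare n)
  : Prop := par12_image alpha beta gamma L = triples L.

Definition in_Par12 (n : nat) (alpha beta gamma : {perm 'I_n}) : Prop :=
  exists L : lsquare n, is_latin L /\ is_autopar12 alpha beta gamma L.

(* Main.v *)
Require Import Defs.
From mathcomp Require Import all_boot all_fingroup all_algebra zify.
Set Implicit Arguments. Unset Strict Implicit. Unset Printing Implicit Defensive.

Lemma autopar_iff n (g : {perm 'I_n}) (L : lsquare n) :
  is_autopar12 1%g 1%g g L <-> forall x y, L (y,x) = g (L (x,y)).
Proof.
split=> [H x y|H].
  have: ((y, x), g (L (x,y))) \in par12_image 1%g 1%g g L.
    by apply/imsetP; exists ((x,y), L (x,y)); rewrite ?inE ?perm1.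
  by rewrite H inE /= => /eqP.
apply/setP=> [[[x y] z]]; rewrite inE /=; apply/imsetP/eqP.
  case=> [[[x' y'] z']]; rewrite inE /= => /eqP <- [-> -> ->].
  by rewrite !perm1 H.
move=> <-; exists ((y, x), L (y, x)); first by rewrite inE.
by rewrite !perm1 /= H.
Qed.

Definition fixs (S : finType) (g : S -> S) := [set s | g s == s].
Definition lows (S : finType) (g : S -> S) :=
  [set s | enum_rank s < enum_rank (g s)].

Lemma card_inv (S : finType) (g : S -> S) : involutive g ->
  #|S| = #|fixs g| + 2 * #|lows g|.
Proof.
move=> gK.
pose H := [set s | enum_rank (g s) < enum_rank s].
have HE : H = g @: lows g.
  apply/setP=> s; rewrite inE; apply/idP/imsetP.
    by move=> hs; exists (g s); rewrite ?gK // inE gK.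
  by case=> t; rewrite inE => ht ->; rewrite gK.
have cH : #|H| = #|lows g| by rewrite HE card_imset //; apply: inv_inj.
rewrite -cardsT mul2n -addnn.
have -> : [set: S] = fixs g :|: (lows g :|: H).
  apply/setP=> s; rewrite !inE; case: ltngtP; rewrite ?orbT ?orbF // => /ord_inj/enum_rank_inj <-.
  by rewrite eqxx.
rewrite cardsU cardsU cH.
have -> : lows g :&: H = set0.
  by apply/setP=> s; rewrite !inE; case: ltngtP.
have -> : fixs g :&: (lows g :|: H) = set0.
  apply/setP=> s; rewrite !inE; case: eqP => //= ->; rewrite ltnn //.
by rewrite !cards0 !subn0.
Qed.

Definition sbij (S T : finType) (A : {set S}) (B : {set T}) (d : T) (s : S) :=
  nth d (enum B) (index s (enum A)).

Lemma sbij_mem (S T : finType) (A : {set S}) (B : {set T}) d s :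
  #|A| <= #|B| -> s \in A -> sbij A B d s \in B.
Proof.
move=> le sA; rewrite /sbij -mem_enum mem_nth // -cardE.
by apply: leq_trans le; rewrite cardE index_mem mem_enum.
Qed.

Arguments sbij_mem {S T A B} d {s}.

Lemma sbij_def (S T : finType) (A : {set S}) (B : {set T}) d d' s :
  #|A| <= #|B| -> s \in A -> sbij A B d s = sbij A B d' s.
Proof.
move=> le sA; rewrite /sbij; apply: set_nth_default.
by rewrite -cardE; apply: leq_trans le; rewrite cardE index_mem mem_enum.
Qed.

Arguments sbij_def {S T A B} d d' {s}.

Lemma sbij_inj (S T : finType) (A : {set S}) (B : {set T}) d d' s1 s2 :
  #|A| <= #|B| -> s1 \in A -> s2 \in A -> sbij A B d s1 = sbij A B d' s2 -> s1 = s2.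
Proof.
move=> le s1A s2A; rewrite (sbij_def d d' le s1A) /sbij => /eqP.
have i1 : index s1 (enum A) < size (enum B).
  by rewrite -cardE; apply: leq_trans le; rewrite cardE index_mem mem_enum.
have i2 : index s2 (enum A) < size (enum B).
  by rewrite -cardE; apply: leq_trans le; rewrite cardE index_mem mem_enum.
rewrite nth_uniq ?enum_uniq // => /eqP e.
have -> : s1 = nth s1 (enum A) (index s1 (enum A)) by rewrite nth_index ?mem_enum.
by rewrite e nth_index ?mem_enum.
Qed.

Arguments sbij_inj {S T A B} d d' {s1 s2}.

Lemma conj_inv (S T : finType) (g : S -> S) (h : T -> T) :
  involutive g -> involutive h -> #|S| = #|T| -> #|fixs g| = #|fixs h| ->
  exists psi : S -> T, injective psi /\ forall s, psi (g s) = h (psi s).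
Proof.
move=> gK hK eST eF.
have eL : #|lows g| = #|lows h|.
  have := card_inv gK; rewrite eST (card_inv hK) eF => /eqP.
  by rewrite eqn_add2l eqn_pmul2l // => /eqP.
have leF : #|fixs g| <= #|fixs h| by rewrite eF.
have leL : #|lows g| <= #|lows h| by rewrite eL.
pose b0 (s : S) : T := enum_val (cast_ord eST (enum_rank s)).
pose psi s := if s \in fixs g then sbij (fixs g) (fixs h) (b0 s) s
  else if s \in lows g then sbij (lows g) (lows h) (b0 s) s
  else h (sbij (lows g) (lows h) (b0 s) (g s)).
have cl s : [\/ s \in fixs g, s \in lows g | g s \in lows g /\ s \notin fixs g /\ s \notin lows g].
  rewrite !inE gK; case: ltngtP; rewrite ?orbT ?orbF.
  - by move=> _; apply: Or32.
  - move=> lt; apply: Or33; split=> //; split=> //.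
    by apply/negP=> /eqP e; move: lt; rewrite e ltnn.
  - by move=> /ord_inj/enum_rank_inj <-; rewrite eqxx; apply: Or31.
have clT t : [\/ t \in fixs h, t \in lows h | h t \in lows h /\ t \notin fixs h /\ t \notin lows h].
  rewrite !inE hK; case: ltngtP; rewrite ?orbT ?orbF.
  - by move=> _; apply: Or32.
  - move=> lt; apply: Or33; split=> //; split=> //.
    by apply/negP=> /eqP e; move: lt; rewrite e ltnn.
  - by move=> /ord_inj/enum_rank_inj <-; rewrite eqxx; apply: Or31.
have Fl s : s \in fixs g -> s \notin lows g.
  by rewrite !inE => /eqP ->; rewrite ltnn.
have Lf s : s \in lows g -> s \notin fixs g.
  by apply: contraL; apply: Fl.
have FlT t : t \in fixs h -> t \notin lows h.
  by rewrite !inE => /eqP ->; rewrite ltnn.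
have lg s : s \in lows g -> (g s \notin fixs g) /\ (g s \notin lows g).
  rewrite !inE gK => lt; split.
    by apply/negP=> /eqP e; move: lt; rewrite -e ltnn.
  by rewrite ltnNge ltnW.
have lh t : t \in lows h -> (h t \notin fixs h) /\ (h t \notin lows h).
  rewrite !inE hK => lt; split.
    by apply/negP=> /eqP e; move: lt; rewrite -e ltnn.
  by rewrite ltnNge ltnW.
exists psi; split.
  move=> s1 s2; rewrite /psi.
  case: (cl s1) => [h1|h1|[h1 [n1 m1]]]; case: (cl s2) => [h2|h2|[h2 [n2 m2]]];
  rewrite ?h1 ?h2 ?(negPf (Lf _ h1)) ?(negPf (Lf _ h2)) ?(negPf (Fl _ h1)) ?(negPf (Fl _ h2)) ?(negPf n1) ?(negPf n2)
    ?(negPf m1) ?(negPf m2).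
  - by apply: sbij_inj.
  - move=> e; have := sbij_mem (b0 s1) leF h1; rewrite e => /FlT.
    by rewrite (sbij_mem _ leL h2).
  - move=> e; have := sbij_mem (b0 s1) leF h1; rewrite e.
    by case: (lh _ (sbij_mem (b0 s2) leL h2)) => /negPf ->.
  - move=> e; have := sbij_mem (b0 s2) leF h2; rewrite -e => /FlT.
    by rewrite (sbij_mem _ leL h1).
  - by apply: sbij_inj.
  - move=> e; have := sbij_mem (b0 s1) leL h1; rewrite e.
    by case: (lh _ (sbij_mem (b0 s2) leL h2)) => _ /negPf ->.
  - move=> e; have := sbij_mem (b0 s2) leF h2; rewrite -e.
    by case: (lh _ (sbij_mem (b0 s1) leL h1)) => /negPf ->.
  - move=> e; have := sbij_mem (b0 s2) leL h2; rewrite -e.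
    by case: (lh _ (sbij_mem (b0 s1) leL h1)) => _ /negPf ->.
  - by move=> /(can_inj hK) /(sbij_inj _ _ leL h1 h2) /(can_inj gK).
move=> s; rewrite /psi.
case: (cl s) => [h1|h1|[h1 [n1 m1]]].
- have e : g s = s by move: h1; rewrite inE => /eqP.
  by rewrite e h1; have := sbij_mem (b0 s) leF h1; rewrite inE => /eqP ->.
- case: (lg _ h1) => /negPf -> /negPf ->; rewrite h1 gK.
  by rewrite (negPf (Lf _ h1)); congr h; apply: (sbij_def _ _ leL h1).
- rewrite h1 (negPf n1) (negPf m1).
  have -> : g s \in fixs g = false.
    by apply/negbTE/negP=> /Fl; rewrite h1.
  by rewrite hK; apply: (sbij_def _ _ leL h1).
Qed.

Import GRing.Theory.
Local Open Scope ring_scope.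

Lemma dbl_id k (z : 'I_(k.*2).+1) : (z + z) *+ k.+1 = z.
Proof.
apply: val_inj; rewrite Zp_mulrn /= modnMml.
have e m : ((m + m) * k.+1 = m * (k.*2).+1 + m)%N.
  by rewrite -muln2; nia.
rewrite e.
by rewrite modnMDl modn_small.
Qed.

Lemma dbl_inj k (x y : 'I_(k.*2).+1) : x + x = y + y -> x = y.
Proof. by move=> e; rewrite -(dbl_id x) e dbl_id. Qed.

Definition addmod b (c c' : 'I_b) : 'I_b :=
  Ordinal (ltn_pmod (c + c')%N (leq_ltn_trans (leq0n c) (ltn_ord c))).

Lemma addmodC b (c c' : 'I_b) : addmod c c' = addmod c' c.
Proof. by apply: val_inj; rewrite /= addnC. Qed.

Lemma addmod_inj b (c : 'I_b) : injective (addmod c).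
Proof.
move=> c1 c2 /(congr1 val) /= /eqP; rewrite eqn_modDl !modn_small //.
by move=> /eqP /val_inj.
Qed.

Lemma inord_inj k b (c1 c2 : 'I_b) : (b <= k.+1)%N ->
  (inord c1 : 'I_k.+1) = inord c2 -> c1 = c2.
Proof.
move=> hb e; have := congr1 (@nat_of_ord _) e.
rewrite !inordK => [/val_inj //||].
- by apply: leq_trans hb.
- by apply: leq_trans hb.
Qed.

Lemma inlI (A B : Type) (a a' : A) : @inl A B a = inl a' -> a = a'.
Proof. by case. Qed.
Lemma inrI (A B : Type) (a a' : B) : @inr A B a = inr a' -> a = a'.
Proof. by case. Qed.

Notation T3 r b := ('I_(r.*2).+1 + 'I_b)%type.

Definition g3 r b (s : T3 r b) : T3 r b :=
  match s with inl d => inl (- d) | inr c => inr c end.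

Definition L3 r b (p q : T3 r b) : T3 r b :=
  match p, q with
  | inl x, inl y => if [pick c : 'I_b | inord c == x + y] is Some c then inr c
                    else inl (y - x)
  | inl x, inr c => inl (inord c - (x + x))
  | inr c, inl y => inl ((y + y) - inord c)
  | inr c, inr c' => inr (addmod c c')
  end.

Lemma g3K r b : involutive (@g3 r b).
Proof. by case=> [d|c] //=; rewrite opprK. Qed.

Lemma L3_tw r b (hb : (b <= (r.*2).+1)%N) (x y : T3 r b) : L3 y x = g3 (L3 x y).
Proof.
case: x y => [x|c] [y|c'] /=.
- case: pickP => [c1 /eqP h1|n1]; case: pickP => [c2 /eqP h2|n2] //=.
  + by congr inr; apply: (inord_inj hb); rewrite h1 h2 addrC.
  + by have := n2 c1; rewrite h1 addrC eqxx.
  + by have := n1 c2; rewrite h2 addrC eqxx.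
  + by rewrite opprB.
- by rewrite opprB.
- by rewrite opprB.
- by rewrite addmodC.
Qed.

Lemma L3_row r b (hb : (b <= (r.*2).+1)%N) (x : T3 r b) : injective (L3 x).
Proof.
case: x => [x|c] [y1|c1] [y2|c2] /=.
- case: pickP => [d1 /eqP h1|n1]; case: pickP => [d2 /eqP h2|n2] //=.
  + by move=> E; have e := inrI E; move: h1; rewrite e h2 => /addrI ->.
  + by move=> E; have eq1 := inlI E; rewrite (addIr _ eq1).
- case: pickP => [d1 /eqP h1|n1] //= => E; have e := inlI E.
  have e2 : inord c2 = x + y1.
    by rewrite -[inord c2](subrK (x + x)) -e addrA subrK addrC.
  by have := n1 c2; rewrite e2 eqxx.
- case: pickP => [d2 /eqP h2|n2] //= => E; have e := inlI E.
  have e2 : inord c1 = x + y2.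
    by rewrite -[inord c1](subrK (x + x)) e addrA subrK addrC.
  by have := n2 c1; rewrite e2 eqxx.
- by move=> E; have e := inlI E; rewrite (inord_inj hb (addIr _ e)).
- by move=> E; have e := inlI E; rewrite (dbl_inj (addIr _ e)).
- by [].
- by [].
- by move=> E; have e := inrI E; rewrite (addmod_inj e).
Qed.

Lemma neg_fix k (d : 'I_(k.*2).+1) : (- d == d) = (d == 0).
Proof.
apply/eqP/eqP=> [e|->]; last by rewrite oppr0.
by apply: dbl_inj; rewrite addr0 -{1}e addNr.
Qed.

Lemma inr_inj' (A B : Type) : injective (@inr A B).
Proof. by move=> x y E; have := inrI E. Qed.
Lemma inl_inj' (A B : Type) : injective (@inl A B).
Proof. by move=> x y E; have := inlI E. Qed.

Lemma g3_fix r b : #|fixs (@g3 r b)| = b.+1.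
Proof.
have E : fixs (@g3 r b) = inl 0 |: (inr @: [set: 'I_b]).
  apply/setP=> [[d|c]]; rewrite !inE /=.
    have -> : (@inl _ 'I_b d \in inr @: [set: 'I_b]) = false.
      by apply/negbTE/negP=> /imsetP [c _].
    by rewrite orbF !(inj_eq (@inl_inj' _ _)) neg_fix.
  by rewrite eqxx; apply/esym/imset_f; rewrite inE.
rewrite E cardsU1 card_imset; last exact: inr_inj'.
have nI : (inl 0 : T3 r b) \notin inr @: [set: 'I_b].
  by apply/negP=> /imsetP [c _].
by rewrite nI cardsT card_ord.
Qed.

Lemma card_T3 r b : #|{: T3 r b}| = ((r.*2).+1 + b)%N.
Proof. by rewrite card_sum !card_ord. Qed.

Lemma val_opp k (d : 'I_k.+1) : nat_of_ord (- d) = ((k.+1 - d) %% k.+1)%N.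
Proof. by []. Qed.
Lemma val_add k (x y : 'I_k.+1) : nat_of_ord (x + y) = ((x + y) %% k.+1)%N.
Proof. by []. Qed.

Definition dl k r (d : 'I_(r.*2).+1) : 'I_(k.*2).+1 :=
  if (d <= r)%N then inord d else - inord ((r.*2).+1 - d).

Lemma val_dl k r (hr : (r <= k)%N) d :
  nat_of_ord (@dl k r d) = if (d <= r)%N then nat_of_ord d else ((k.*2).+1 - ((r.*2).+1 - d))%N.
Proof.
rewrite /dl; case: ifP => hd; first by rewrite inordK //; lia.
have hd2 := ltn_ord d.
rewrite val_opp inordK; last by lia.
rewrite modn_small //; lia.
Qed.

Lemma dl_inj k r (hr : (r <= k)%N) : injective (@dl k r).
Proof.
move=> d1 d2 /(congr1 (@nat_of_ord _)); rewrite !val_dl //.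
have := ltn_ord d1; have := ltn_ord d2.
case: ifP => h1; case: ifP => h2 => l2 l1 e; apply: ord_inj; lia.
Qed.

Lemma dl_opp k r (hr : (r <= k)%N) d : @dl k r (- d) = - dl k d.
Proof.
apply: ord_inj; rewrite val_opp !val_dl // val_opp.
have := ltn_ord d.
case: (posnP d) => [d0|dp] ld.
  rewrite d0 subn0 modnn /= modnn; done.
rewrite (modn_small (m := ((r.*2).+1 - d)%N)); last by lia.
case: ifP => h1; case: ifP => h2; rewrite ?modn_small; lia.
Qed.

Notation T4 k r := ('I_(k.*2).+1 + 'I_(r.*2).+1)%type.

Definition g4 k r (s : T4 k r) : T4 k r :=
  match s with inl x => inl x | inr d => inr (- d) end.

Definition L4 k r (p q : T4 k r) : T4 k r :=
  match p, q with
  | inl x, inl y => if [pick d | dl k d == y - x] is Some d then inr d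
                    else inl (x + y)
  | inl x, inr d => inl (x + x + dl k d)
  | inr d, inl y => inl (y + y + dl k d)
  | inr d, inr d' => inr (d' - d)
  end.

Lemma g4K k r : involutive (@g4 k r).
Proof. by case=> [d|c] //=; rewrite opprK. Qed.

Lemma L4_tw k r (hr : (r <= k)%N) (x y : T4 k r) : L4 y x = g4 (L4 x y).
Proof.
case: x y => [x|c] [y|c'] //=.
- case: pickP => [c1 /eqP h1|n1]; case: pickP => [c2 /eqP h2|n2] //=.
  + congr inr; apply: (dl_inj hr).
    by rewrite dl_opp // h1 h2 opprB.
  + by have := n2 (- c1); rewrite dl_opp // h1 opprB eqxx.
  + by have := n1 (- c2); rewrite dl_opp // h2 opprB eqxx.
  + by rewrite addrC.
- by rewrite opprB.
Qed.

Lemma L4_row k r (hr : (r <= k)%N) (x : T4 k r) : injective (L4 x).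
Proof.
case: x => [x|c] [y1|c1] [y2|c2] /=.
- case: pickP => [d1 /eqP h1|n1]; case: pickP => [d2 /eqP h2|n2] //=.
  + move=> E; have e := inrI E; move: h1; rewrite e h2 => /addIr ->.
    by [].
  + by move=> E; have e := inlI E; rewrite (addrI _ e).
- case: pickP => [d1 /eqP h1|n1] //= => E; have e := inlI E.
  have e2 : dl k c2 = y1 - x.
    have e' : y1 = x + dl k c2 by apply: (addrI x); rewrite e addrA.
    by rewrite e' [x + _]addrC addrK.
  by have := n1 c2; rewrite e2 eqxx.
- case: pickP => [d2 /eqP h2|n2] //= => E; have e := inlI E.
  have e2 : dl k c1 = y2 - x.
    have e' : y2 = x + dl k c1 by apply: (addrI x); rewrite -e addrA.
    by rewrite e' [x + _]addrC addrK.
  by have := n2 c1; rewrite e2 eqxx.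
- by move=> E; have e := inlI E; rewrite (dl_inj hr (addrI _ e)).
- by move=> E; have e := inlI E; rewrite (dbl_inj (addIr _ e)).
- by [].
- by [].
- by move=> E; have e := inrI E; rewrite (addIr _ e).
Qed.

Lemma g4_fix k r : #|fixs (@g4 k r)| = ((k.*2).+1).+1.
Proof.
have E : fixs (@g4 k r) = inr 0 |: (inl @: [set: 'I_(k.*2).+1]).
  apply/setP=> [[d|c]]; rewrite !inE /=.
    by rewrite eqxx; apply/esym/imset_f; rewrite inE.
  have -> : (@inr 'I_(k.*2).+1 _ c \in inl @: [set: 'I_(k.*2).+1]) = false.
    by apply/negbTE/negP=> /imsetP [d _].
  by rewrite orbF !(inj_eq (@inr_inj' _ _)) neg_fix.
rewrite E cardsU1 card_imset; last exact: inl_inj'.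
have nI : (inr 0 : T4 k r) \notin inl @: [set: 'I_(k.*2).+1].
  by apply/negP=> /imsetP [c _].
by rewrite nI cardsT card_ord.
Qed.

Lemma card_T4 k r : #|{: T4 k r}| = ((k.*2).+1 + (r.*2).+1)%N.
Proof. by rewrite card_sum !card_ord. Qed.

Notation D2 r := {d : 'I_(r.*2).+1 | d != 0}.

Lemma negD_subproof r (d : D2 r) : (- val d) != 0.
Proof. by rewrite oppr_eq0 (valP d). Qed.
Definition negD r (d : D2 r) : D2 r := exist _ (- val d) (negD_subproof d).

Lemma negDK r : involutive (@negD r).
Proof. by move=> d; apply: val_inj; rewrite /= opprK. Qed.

Definition dd k r (d : D2 r) : 'I_(k.*2).+1 := dl k (val d).

Lemma dd_inj k r (hr : (r <= k)%N) : injective (@dd k r).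
Proof. by move=> d1 d2 /(dl_inj hr) /val_inj. Qed.

Lemma dd_neg k r (hr : (r <= k)%N) d : dd k (@negD r d) = - dd k d.
Proof. by rewrite /dd /= dl_opp. Qed.

Notation T2 k r := ('I_(k.*2).+1 + D2 r)%type.

Definition g2 k r (s : T2 k r) : T2 k r :=
  match s with inl x => inl x | inr d => inr (negD d) end.

Definition L2 k r (p q : T2 k r) : T2 k r :=
  match p, q with
  | inl x, inl y => if [pick d | dd k d == y - x] is Some d then
                      (if x + y == 0 then inl 0 else inr d)
                    else inl (x + y)
  | inl x, inr d => if x + x + dd k d == 0 then inr d else inl (x + x + dd k d)
  | inr d, inl y => if y + y + dd k d == 0 then inr (negD d)
                    else inl (y + y + dd k d)
  | inr d, inr d' => if @insub _ (fun z => z != 0) _ (val d' - val d) is Some e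
                     then inr e else inl 0
  end.

Lemma g2K k r : involutive (@g2 k r).
Proof. by case=> [d|c] //=; rewrite negDK. Qed.

Lemma L2_tw k r (hr : (r <= k)%N) (x y : T2 k r) : L2 y x = g2 (L2 x y).
Proof.
case: x y => [x|c] [y|c'] /=.
- case: pickP => [c1 /eqP h1|n1]; case: pickP => [c2 /eqP h2|n2] /=.
  + rewrite addrC; case: ifP => //= _; congr inr; apply: (dd_inj hr).
    by rewrite dd_neg // h1 h2 opprB.
  + by have := n2 (negD c1); rewrite dd_neg // h1 opprB eqxx.
  + by have := n1 (negD c2); rewrite dd_neg // h2 opprB eqxx.
  + by rewrite addrC.
- by case: ifP.
- by case: ifP => //=; rewrite negDK.
- case: insubP => [e1 ne1 he1|z1]; case: insubP => [e2 ne2 he2|z2] /=.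
  + by congr inr; apply: val_inj; rewrite /= he1 he2 opprB.
  + by move: z2; rewrite -oppr_eq0 opprB ne1.
  + by move: z1; rewrite -oppr_eq0 opprB ne2.
  + by [].
Qed.

Lemma L2_mix1 k r (hr : (r <= k)%N) (x y : 'I_(k.*2).+1) (c : D2 r) :
  L2 (inl x) (inl y) != L2 (inl x) (inr c) :> T2 k r.
Proof.
rewrite /=; apply/negP => /eqP.
case: pickP => [d1 /eqP h1|n1]; [case: ifP => /eqP hz|];
  case: ifP => /eqP hs E //.
- by apply: hs; rewrite (inlI E).
- apply: hz; rewrite (inrI E) in h1.
  by rewrite -hs h1 -addrA [_ + (_ - _)]addrC subrK.
- have e := inlI E.
  have e2 : dd k c = y - x.
    have e' : y = x + dd k c by apply: (addrI x); rewrite e addrA.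
    by rewrite e' [x + _]addrC addrK.
  by have := n1 c; rewrite e2 eqxx.
Qed.

Lemma L2_mix2 k r (c : D2 r) (y : 'I_(k.*2).+1) (c' : D2 r) :
  L2 (inr c) (inl y) != L2 (inr c) (inr c') :> T2 k r.
Proof.
rewrite /=; case: ifP => /eqP hz; case: insubP => [e ne he|z] //=.
- apply/negP => /eqP E; have e1 := inrI E.
  have : val c' = 0.
    by rewrite -(subrK (val c) (val c')) -he -e1 /= addNr.
  by move/eqP; rewrite (negPf (valP c')).
- by apply/negP => /eqP E; have e1 := inlI E.
Qed.

Lemma L2_row k r (hr : (r <= k)%N) (x : T2 k r) : injective (L2 x).
Proof.
case: x => [x|c] [y1|c1] [y2|c2].
- rewrite /=.
  case: pickP => [d1 /eqP h1|n1]; [case: ifP => /eqP s1|];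
  case: pickP => [d2 /eqP h2|n2]; try case: ifP => /eqP s2; move=> E //;
  first [ by rewrite (addrI x (etrans s1 (esym s2)))
        | by rewrite (inrI E) h2 in h1; rewrite (addIr _ h1)
        | by rewrite (addrI x (etrans s1 (inlI E)))
        | by rewrite (addrI x (etrans (inlI E) (esym s2)))
        | by rewrite (addrI x (inlI E)) ].
- by move=> E; move: (L2_mix1 hr x y1 c2); rewrite E eqxx.
- by move=> E; move: (L2_mix1 hr x y2 c1); rewrite E eqxx.
- rewrite /=; case: ifP => /eqP s1; case: ifP => /eqP s2 E //;
  first [ by rewrite (inrI E) | by rewrite (dd_inj hr (addrI _ (inlI E))) ].
- rewrite /=; case: ifP => /eqP s1; case: ifP => /eqP s2 E //;
  first [ by rewrite (dbl_inj (addIr _ (etrans s1 (esym s2))))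
        | by rewrite (dbl_inj (addIr _ (inlI E))) ].
- by move=> E; move: (L2_mix2 c y1 c2); rewrite E eqxx.
- by move=> E; move: (L2_mix2 c y2 c1); rewrite E eqxx.
- rewrite /=; case: insubP => [e1 ne1 he1|z1]; case: insubP => [e2 ne2 he2|z2] E //.
  + have H := congr1 val (inrI E); rewrite he1 he2 in H.
    by rewrite (val_inj (addIr _ H)).
  + move: z1 z2; rewrite !negbK !subr_eq0 => /eqP e1' /eqP e2'.
    by congr inr; apply: val_inj => /=; rewrite e1' e2'.
Qed.

Lemma g2_fix k r : #|fixs (@g2 k r)| = (k.*2).+1.
Proof.
have E : fixs (@g2 k r) = inl @: [set: 'I_(k.*2).+1].
  apply/setP=> [[d|c]]; rewrite !inE /=.
    by rewrite eqxx; apply/esym/imset_f; rewrite inE.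
  have -> : (@inr 'I_(k.*2).+1 _ c \in inl @: [set: 'I_(k.*2).+1]) = false.
    by apply/negbTE/negP=> /imsetP [d _].
  rewrite (inj_eq (@inr_inj' _ _)); apply/negbTE/eqP => /(congr1 val) /= /eqP.
  by rewrite neg_fix (negPf (valP c)).
by rewrite E card_imset ?cardsT ?card_ord //; exact: inl_inj'.
Qed.

Lemma card_T2 k r : #|{: T2 k r}| = ((k.*2).+1 + r.*2)%N.
Proof.
rewrite card_sum card_ord card_sig.
have -> : #|[pred d : 'I_(r.*2).+1 | d != 0]| = #|predC1 (0 : 'I_(r.*2).+1)|.
  by apply: eq_card => d; rewrite !inE.
by rewrite cardC1 card_ord.
Qed.

Local Close Scope ring_scope.

Definition realizable n f := exists (T S : finType) (g : S -> S) (L : T -> T -> S),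
  [/\ #|T| = n, #|S| = n, involutive g, #|fixs g| = f &
      (forall x, injective (L x)) /\ (forall x y, L y x = g (L x y))].

Lemma realize_all f r : 0 < f -> realizable (f + 2 * r) f.
Proof.
move=> f0.
case: (leqP f (r.*2).+2) => hf.
  have hb : f.-1 <= (r.*2).+1 by lia.
  exists {: T3 r f.-1}, {: T3 r f.-1}, (@g3 r f.-1), (@L3 r f.-1); split.
  - by rewrite card_T3; lia.
  - by rewrite card_T3; lia.
  - exact: g3K.
  - by rewrite g3_fix; lia.
  - by split; [exact: L3_row | exact: L3_tw].
have hfo := odd_double_half f.
case: (boolP (odd f)) => ofd.
  set k := f./2 in hfo; have hk : r <= k by move: hfo; rewrite ofd; lia.
  have ef : f = (k.*2).+1 by move: hfo; rewrite ofd; lia.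
  exists {: T2 k r}, {: T2 k r}, (@g2 k r), (@L2 k r); split.
  - by rewrite card_T2; lia.
  - by rewrite card_T2; lia.
  - exact: g2K.
  - by rewrite g2_fix; lia.
  - by split; [exact: L2_row | exact: L2_tw].
set k := (f.-1)./2.
have hfo' := odd_double_half f.-1.
have ofd' : odd f.-1 by move: ofd; case: f f0 {hf hfo hfo' k} => //= f' _; rewrite negbK.
rewrite ofd' in hfo'.
have hk : r <= k by lia.
exists {: T4 k r}, {: T4 k r}, (@g4 k r), (@L4 k r); split.
- by rewrite card_T4; lia.
- by rewrite card_T4; lia.
- exact: g4K.
- by rewrite g4_fix; lia.
- by split; [exact: L4_row | exact: L4_tw].
Qed.

Lemma transfer n (gam : {perm 'I_n}) (T S : finType) (g : S -> S)
  (L : T -> T -> S) (psi : S -> 'I_n) (phi : 'I_n -> T) :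
  (forall x, injective (L x)) -> (forall x y, L y x = g (L x y)) ->
  injective psi -> injective phi -> (forall s, psi (g s) = gam (psi s)) ->
  in_Par12 1%g 1%g gam.
Proof.
move=> Li tw psii phii psig.
exists [ffun p => psi (L (phi p.1) (phi p.2))]; split; first split.
- by move=> x y1 y2; rewrite !ffunE /= => /psii /Li /phii.
- move=> y x1 x2; rewrite !ffunE /= (tw (phi y) (phi x1)) (tw (phi y) (phi x2)).
  by rewrite !psig => /perm_inj /psii /Li /phii.
apply/autopar_iff=> x y; rewrite !ffunE /=.
by rewrite (tw (phi x) (phi y)) psig.
Qed.


Theorem theorem4p7 (n : nat) (hn : 0 < n) (gamma : {perm 'I_n}) :
  in_Par12 1%g 1%g gamma <->
  ((gamma * gamma)%g = 1%g /\ exists x : 'I_n, gamma x = x).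
Proof.
pose i0 : 'I_n := Ordinal hn.
split.
  case=> L [[Lr Lc] /autopar_iff tw]; split; last first.
    by exists (L (i0, i0)); rewrite -tw.
  apply/permP=> z; rewrite permM perm1.
  have /codomP [y ->] := injF_onto (Lr i0) z.
  by rewrite -tw -tw.
case=> g2 [x gx].
have gK : involutive gamma.
  by move=> z; rewrite -permM g2 perm1.
have f0 : 0 < #|fixs gamma|.
  by apply/card_gt0P; exists x; rewrite inE gx.
have := card_inv gK; rewrite card_ord => en.
have [T [S [g [L [eT eS gI eF [Li tw]]]]]] := realize_all (#|lows gamma|) f0.
rewrite -en in eT eS.
have [psi [psii psig]] := conj_inv gI gK (etrans eS (esym (card_ord n)))
  (etrans eF (erefl _)).
pose phi (i : 'I_n) : T := enum_val (cast_ord (esym eT) i).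
have phii : injective phi.
  by move=> i j /enum_val_inj /(congr1 val) /= /val_inj.
exact: (transfer Li tw psii phii psig).
Qed.
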